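(* Let $A$ be a distributive meet-complemented lattice in which $\Box x$ and $\Diamond x$ exist for every $x\in A$. Then for all $a,b\in A$: (D1) $\Diamond a\wedge\Box b\le\Diamond(a\wedge b)$ and (D2) $\Box(a\vee b)\le\Box a\vee\Diamond b$.
   Context: A meet-complemented lattice is a lattice $(L,\le)$ such that for every $a\in L$ the element $\neg a=\max\{b\in L: a\wedge b\le c\ \text{for all } c\in L\}$ exists; it is bounded with bottom $0$ and top $1$. For $a\in L$, $\Box a=\max\{b\in L: a\vee\neg b=1\}$ and $\Diamond a=\min\{b\in L: \neg a\vee b=1\}$. *)

(* Defs.v *)
From HB Require Import structures.
From mathcomp Require Import all_boot all_order.
Set Implicit Arguments. Unset Strict Implicit. Unset Printing Implicit Defensive.
Import Order.TTheory.
Local Open Scope order_scope.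

Definition is_max d (T : porderType d) (P : T -> Prop) (m : T) : Prop :=
  P m /\ forall b, P b -> b <= m.

Definition is_min d (T : porderType d) (P : T -> Prop) (m : T) : Prop :=
  P m /\ forall b, P b -> m <= b.

Definition meet_complement d (T : latticeType d) (neg : T -> T) : Prop :=
  forall a : T, is_max (fun b : T => forall c : T, a `&` b <= c) (neg a).

Definition is_box d (T : tbLatticeType d) (neg box : T -> T) : Prop :=
  forall a : T, is_max (fun b : T => a `|` neg b = \top) (box a).

Definition is_dia d (T : tbLatticeType d) (neg dia : T -> T) : Prop :=
  forall a : T, is_min (fun b : T => neg a `|` b = \top) (dia a).

(* Main.v *)
Require Import Defs.
From HB Require Import structures.
From mathcomp Require Import all_boot all_order.
Import Order.TTheory.
Local Open Scope order_scope.

Lemma mc_bot {d} {A : tbDistrLatticeType d} {neg : A -> A} :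
  meet_complement neg -> forall a : A, a `&` neg a = \bot.
Proof. move=> H a; apply/le_anti; rewrite le0x andbT; exact: (proj1 (H a)). Qed.

Lemma mc_le {d} {A : tbDistrLatticeType d} {neg : A -> A} :
  meet_complement neg -> forall a b : A, a `&` b <= \bot -> b <= neg a.
Proof. move=> H a b hab; apply: (proj2 (H a)) => c; exact: le_trans hab (le0x _). Qed.

Lemma top_eq {d} {A : tbDistrLatticeType d} (x : A) : \top <= x -> x = \top.
Proof. by move=> h; apply/le_anti; rewrite h lex1. Qed.

Theorem proposition15 (d : Order.disp_t) (A : tbDistrLatticeType d)
  (neg box dia : A -> A) :
  meet_complement neg -> is_box neg box -> is_dia neg dia ->
  forall a b : A,
    dia a `&` box b <= dia (a `&` b) /\
    box (a `|` b) <= box a `|` dia b.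
Proof.
move=> Hn Hb Hd a b; split.
- set N := neg (a `&` b); set x := dia (a `&` b); set p := neg (box b).
  have H1 : N `|` x = \top := proj1 (Hd (a `&` b)).
  have H2 : b `|` p = \top := proj1 (Hb b).
  have HNb : N `&` b <= neg a.
    have HH := mc_le Hn a (N `&` b).
    apply: HH; rewrite -(mc_bot Hn (a `&` b)) !lexI.
    rewrite leIl /= (le_trans (leIr _ _) (leIr _ _)) /=.
    exact: le_trans (leIr _ _) (leIl _ _).
  have H3 : neg a `|` (x `|` p) = \top.
    apply: top_eq; rewrite -(meetxx \top) -{1}H1 -H2.
    rewrite meetUl !meetUr !leUx -!andbA; apply/and4P; split.
    + exact: le_trans HNb (leUl _ _).
    + exact: le_trans (leIr _ _) (le_trans (leUr _ _) (leUr _ _)).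
    + exact: le_trans (leIl _ _) (le_trans (leUl _ _) (leUr _ _)).
    + exact: le_trans (leIl _ _) (le_trans (leUl _ _) (leUr _ _)).
  have H4 : dia a <= x `|` p := proj2 (Hd a) _ H3.
  apply: le_trans (leI2 H4 (lexx (box b))) _.
  rewrite meetUl leUx leIl /=.
  by rewrite meetC (mc_bot Hn (box b)) le0x.
- set c := box (a `|` b).
  have H1 : (a `|` b) `|` neg c = \top := proj1 (Hb (a `|` b)).
  have H2 : neg b `|` dia b = \top := proj1 (Hd b).
  have H3 : c `&` neg b <= box a.
    apply: (proj2 (Hb a)); apply: top_eq; rewrite -H1 -joinA leUx leUl /=.
    apply: (le_trans _ (leUr _ _)); rewrite leUx; apply/andP; split.
      apply: (mc_le Hn); rewrite -meetA (meetC (neg b)) (mc_bot Hn).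
      by rewrite meetx0.
    apply: (mc_le Hn); rewrite meetAC (mc_bot Hn) meet0x //.
  have -> : c = (c `&` neg b) `|` (c `&` dia b).
    by rewrite -meetUr H2 meetx1.
  exact: leU2 H3 (leIr _ _).
Qed.
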